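(* Let $\mathcal K$ be a class of algebras of type $F$ generating a variety $\mathcal V$ (i.e. $\mathsf V(\mathcal K)=\mathcal V$). Then the variety $\mathcal V_\tau$ of all state-morphism algebras $(\mathbf A,\tau)$ with $\mathbf A\in\mathcal V$ is generated by the class $\{D(\mathbf A):\mathbf A\in\mathcal K\}$.
   Context: A state-morphism on an algebra $\mathbf A$ of type $F$ is an endomorphism $\tau$ of $\mathbf A$ with $\tau\circ\tau=\tau$; $(\mathbf A,\tau)$ is a state-morphism algebra (type $F$ plus one unary operation). For an algebra $\mathbf A$ of type $F$, $D(\mathbf A)=(\mathbf A\times\mathbf A,\tau_A)$ with $\tau_A(x,y)=(x,x)$ is the diagonal state-morphism algebra. *)

(* Defs.v *)
From mathcomp Require Import all_boot.
Set Implicit Arguments. Unset Strict Implicit. Unset Printing Implicit Defensive.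

Record signature := Signature { op_sym :> Type; arity : op_sym -> nat }.

Record algebra (F : signature) := Algebra {
  carrier :> Type;
  interp : forall f : F, ('I_(arity f) -> carrier) -> carrier }.

Inductive term (F : signature) : Type :=
| Var : nat -> term F
| App : forall f : F, ('I_(arity f) -> term F) -> term F.

Fixpoint eval (F : signature) (A : algebra F) (v : nat -> A) (t : term F) : A :=
  match t with
  | Var n => v n
  | App f args => @interp F A f (fun i => eval v (args i))
  end.

Definition satisfies (F : signature) (A : algebra F) (e : term F * term F) : Prop :=
  forall v : nat -> A, eval v e.1 = eval v e.2.

Definition alg_class (F : signature) := algebra F -> Prop.

Definition Id_of (F : signature) (K : alg_class F) (e : term F * term F) : Prop :=
  forall A, K A -> satisfies A e.

(* V(K): the variety generated by K (= Mod Id K, the smallest equational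
   class containing K). *)
Definition V_gen (F : signature) (K : alg_class F) : alg_class F :=
  fun A => forall e, Id_of K e -> satisfies A e.

(* Type F plus one unary operation tau (the symbol [None]). *)
Definition sig_tau (F : signature) : signature :=
  @Signature (option F) (fun o => match o with Some f => arity f | None => 1 end).

Definition reduct (F : signature) (B : algebra (sig_tau F)) : algebra F :=
  @Algebra F B (fun f args => @interp _ B (Some f) args).

Definition tau_op (F : signature) (B : algebra (sig_tau F)) (x : B) : B :=
  @interp _ B None (fun _ => x).

Definition is_state_morphism_algebra (F : signature) (B : algebra (sig_tau F)) : Prop :=
  (forall (f : F) (args : 'I_(arity f) -> B),
      tau_op (@interp _ B (Some f) args) = @interp _ B (Some f) (fun i => tau_op (args i)))
  /\ (forall x : B, tau_op (tau_op x) = tau_op x).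

Definition V_tau (F : signature) (V : alg_class F) : alg_class (sig_tau F) :=
  fun B => is_state_morphism_algebra B /\ V (reduct B).

Definition D_interp (F : signature) (A : algebra F) (o : option F) :
  ('I_(@arity (sig_tau F) o) -> A * A) -> A * A :=
  match o as o0 return ('I_(@arity (sig_tau F) o0) -> A * A) -> A * A with
  | Some f => fun args => (@interp F A f (fun i => (args i).1), @interp F A f (fun i => (args i).2))
  | None => fun args => ((args ord0).1, (args ord0).1)
  end.

Definition D_alg (F : signature) (A : algebra F) : algebra (sig_tau F) :=
  @Algebra (sig_tau F) (A * A)%type (@D_interp F A).

Definition D_class (F : signature) (K : alg_class F) : alg_class (sig_tau F) :=
  fun B => exists A, K A /\ B = D_alg A.

(* Main.v *)
Require Import Defs.
From mathcomp Require Import all_boot.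
From Stdlib Require Import FunctionalExtensionality.

Section Aux.
Variable F : signature.

Fixpoint NT (t : term (sig_tau F)) : term F * term F :=
  match t with
  | Var n => (Var F (2 * n), Var F (2 * n).+1)
  | App o args =>
    match o as o0 return ('I_(@arity (sig_tau F) o0) -> term (sig_tau F)) -> term F * term F with
    | Some f => fun args => (@App F f (fun i => (NT (args i)).1), @App F f (fun i => (NT (args i)).2))
    | None => fun args => ((NT (args ord0)).2, (NT (args ord0)).2)
    end args
  end.

Fixpoint lift (t : term F) : term (sig_tau F) :=
  match t with
  | Var n => Var _ n
  | App f args => @App (sig_tau F) (Some f) (fun i => lift (args i))
  end.

Lemma ord1_fun (T : Type) (g : 'I_1 -> T) : g = (fun _ => g ord0).
Proof. apply: functional_extensionality => i; by rewrite (ord1 i). Qed.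

Lemma NT_sm (B : algebra (sig_tau F)) (hB : is_state_morphism_algebra B)
  (v : nat -> B) (t : term (sig_tau F)) :
  let w := fun n => if odd n then tau_op (v n./2) else v n./2 in
  eval v t = eval (A := reduct B) w (NT t).1 /\
  tau_op (eval v t) = eval (A := reduct B) w (NT t).2.
Proof.
move=> w; case: hB => hf hi.
elim: t => [n|[f|] args IH] /=.
- rewrite /w /= mul2n /= odd_double /= uphalf_double doubleK; by [].
- split.
  + congr (interp _); apply: functional_extensionality => i; exact: (IH i).1.
  + rewrite hf; congr (interp _); apply: functional_extensionality => i;
    exact: (IH i).2.
- have [_ h2] := IH ord0.
  have E : @interp _ B None (fun i => eval v (args i)) = tau_op (eval v (args ord0)).
    by rewrite /tau_op; congr (interp _); exact: ord1_fun.
  by rewrite E -h2 hi.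
Qed.

Lemma NT_D (A : algebra F) (u : nat -> A) (t : term (sig_tau F)) :
  let v := fun n => (u (2 * n).+1, u (2 * n)) : (D_alg A) in
  (eval v t).2 = eval u (NT t).1 /\ (eval v t).1 = eval u (NT t).2.
Proof.
move=> v; elim: t => [n|[f|] args IH] //=; last by rewrite (IH ord0).2.
split; congr (interp _); apply: functional_extensionality => i.
- exact: (IH i).1.
- exact: (IH i).2.
Qed.

Lemma lift_red (B : algebra (sig_tau F)) (v : nat -> B) (t : term F) :
  eval v (lift t) = eval (A := reduct B) v t.
Proof.
elim: t => [n|f args IH] //=; congr (interp _).
by apply: functional_extensionality => i.
Qed.

Lemma lift_D (A : algebra F) (v : nat -> D_alg A) (t : term F) :
  eval v (lift t) = (eval (fun n => (v n).1) t, eval (fun n => (v n).2) t).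
Proof.
elim: t => [n|f args IH] /=; first by case: (v n).
by congr (_, _); congr (interp _); apply: functional_extensionality => i;
   rewrite IH.
Qed.

End Aux.

Theorem theorem4p4 (F : signature) (K V : alg_class F)
  (hV : forall A : algebra F, V A <-> V_gen K A) :
  forall B : algebra (sig_tau F), V_tau V B <-> V_gen (D_class K) B.
Proof.
move=> B; split.
- move=> [hB hVB] [s t] hst v /=.
  have hR := (proj1 (hV _) hVB).
  have [-> _] := @NT_sm _ _ hB v s.
  have [-> _] := @NT_sm _ _ hB v t.
  apply: (hR ((NT F s).1, (NT F t).1)).
  move=> A hA u /=.
  have [<- _] := @NT_D _ _ u s.
  have [<- _] := @NT_D _ _ u t.
  by rewrite (hst (D_alg A) (ex_intro _ A (conj hA erefl))).
- move=> hB; split; [split|].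
  + move=> f args.
    pose d := @interp _ B (Some f) args.
    pose v := fun n => match insub n with Some i => args i | None => d end.
    have hv : forall i : 'I_(arity f), v (val i) = args i.
      by move=> i; rewrite /v valK.
    have H2 : satisfies B (@App (sig_tau F) None (fun _ => @App (sig_tau F) (Some f) (fun i => Var _ (val i))),
                @App (sig_tau F) (Some f) (fun i => @App (sig_tau F) None (fun _ => Var _ (val i)))).
      by apply: hB => _ [A [_ ->]] w.
    move: (H2 v) => /=.
    have E1 : (fun i : 'I_(arity f) => v (val i)) = args
      by apply: functional_extensionality.
    have E2 : (fun i : 'I_(arity f) => @interp _ B None (fun _ => v (val i))) = (fun i => tau_op (args i)).
      by apply: functional_extensionality => i; rewrite hv.
    by rewrite E1 E2.
  + move=> x.
    have H2 : satisfies B (@App (sig_tau F) None (fun _ => @App (sig_tau F) None (fun _ => Var _ 0)),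
                @App (sig_tau F) None (fun _ => Var _ 0)).
      by apply: hB => _ [A [_ ->]] w.
    exact: (H2 (fun _ => x)).
  + apply/hV => e he v.
    rewrite -!lift_red.
    apply: (hB (lift F e.1, lift F e.2)) => _ [A [hA ->]] w /=.
    by rewrite !lift_D !(he A hA).
Qed.
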